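(* Let $R$ be a commutative ring and $M$ an $R$-module. The following are equivalent: (1) $M$ is Noetherian; (2) $M$ is uniformly $(R\setminus\mathfrak p)$-Noetherian for every prime ideal $\mathfrak p$ of $R$; (3) $M$ is uniformly $(R\setminus\mathfrak m)$-Noetherian for every maximal ideal $\mathfrak m$ of $R$.
   Context: For a multiplicative subset $S$ of $R$, an $R$-module $M$ is uniformly $S$-Noetherian if there exists a single $s\in S$ such that for every submodule $N$ of $M$ there is a finitely generated submodule $F\subseteq N$ with $sN\subseteq F$. *)

(* Defs.v *)
From HB Require Import structures.
From mathcomp Require Import all_boot all_algebra.
Set Implicit Arguments. Unset Strict Implicit. Unset Printing Implicit Defensive.
Import GRing.Theory.
Local Open Scope ring_scope.

Definition is_ideal (R : comPzRingType) (I : R -> Prop) : Prop :=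
  [/\ I 0, (forall a b, I a -> I b -> I (a + b)) & (forall r a, I a -> I (r * a))].

Definition is_prime_ideal (R : comPzRingType) (P : R -> Prop) : Prop :=
  [/\ is_ideal P, ~ P 1 & (forall a b, P (a * b) -> P a \/ P b)].

Definition is_maximal_ideal (R : comPzRingType) (P : R -> Prop) : Prop :=
  [/\ is_ideal P, ~ P 1 &
      (forall J : R -> Prop, is_ideal J -> (forall x, P x -> J x) ->
         (forall x, J x <-> P x) \/ (forall x, J x))].

Definition is_mult_subset (R : comPzRingType) (S : R -> Prop) : Prop :=
  S 1 /\ (forall a b, S a -> S b -> S (a * b)).

Definition is_submodule (R : comPzRingType) (M : lmodType R) (N : M -> Prop) : Prop :=
  [/\ N 0, (forall x y, N x -> N y -> N (x + y)) & (forall (r : R) x, N x -> N (r *: x))].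

Definition span_of (R : comPzRingType) (M : lmodType R) (s : seq M) : M -> Prop :=
  fun x => exists c : 'I_(size s) -> R, x = \sum_(i < size s) c i *: s`_i.

Definition finitely_generated (R : comPzRingType) (M : lmodType R) (N : M -> Prop) : Prop :=
  exists s : seq M, forall x, N x <-> span_of s x.

Definition noetherian_module (R : comPzRingType) (M : lmodType R) : Prop :=
  forall N : M -> Prop, is_submodule N -> finitely_generated N.

Definition uniformly_S_noetherian (R : comPzRingType) (S : R -> Prop) (M : lmodType R) : Prop :=
  exists2 s : R, S s &
    forall N : M -> Prop, is_submodule N ->
      exists F : M -> Prop,
        [/\ is_submodule F, finitely_generated F,
            (forall x, F x -> N x) & (forall x, N x -> F (s *: x))].

(* Main.v *)
Require Import Defs.
From HB Require Import structures.
From mathcomp Require Import all_boot all_algebra.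
From mathcomp Require Import boolp classical_sets.
Set Implicit Arguments. Unset Strict Implicit. Unset Printing Implicit Defensive.
Import GRing.Theory.
Local Open Scope ring_scope.

Lemma exists_maximal (R : comPzRingType) (J : R -> Prop) :
  is_ideal J -> ~ J 1 ->
  exists m : R -> Prop, is_maximal_ideal m /\ (forall x, J x -> m x).
Proof.
move=> [J0 JD JM] J1.
pose P := fun A : set R => is_ideal (fun x => J x \/ A x) /\ ~ (J 1 \/ A 1).
have [A [[Aid A1] Amax]] : exists A, P A /\ forall B, (A `<` B)%classic -> ~ P B.
  apply: Zorn_bigcup => F FP Ftot; split.
  - split; first by left.
    + move=> a b [Ja|[X FX Xa]] [Jb|[Y FY Yb]].
      * by left; apply: JD.
      * have [[_ YD _] _] := FP Y FY.
        by case: (YD a b (or_introl Ja) (or_intror Yb)) => h; [left|right; exists Y].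
      * have [[_ XD _] _] := FP X FX.
        by case: (XD a b (or_intror Xa) (or_introl Jb)) => h; [left|right; exists X].
      * have [XY|YX] := Ftot X Y FX FY.
          have [[_ YD _] _] := FP Y FY.
          by case: (YD a b (or_intror (XY _ Xa)) (or_intror Yb)) => h; [left|right; exists Y].
        have [[_ XD _] _] := FP X FX.
        by case: (XD a b (or_intror Xa) (or_intror (YX _ Yb))) => h; [left|right; exists X].
    + move=> r a [Ja|[X FX Xa]]; first by left; apply: JM.
      have [[_ _ XM] _] := FP X FX.
      by case: (XM r a (or_intror Xa)) => h; [left|right; exists X].
  - move=> [//|[X FX X1]].
    by have [_ /(_ (or_intror X1))] := FP X FX.
exists (fun x => J x \/ A x); split; last by move=> x; left.
split => // K Kid sK.
have [K0 KD KM] := Kid.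
have [K1|nK1] := pselect (K 1).
  by right => x; rewrite -(mulr1 x); apply: KM.
left.
have PK : P K.
  split.
    split; first by left.
      move=> a b [Ja|Ka] [Jb|Kb]; right; apply: KD => //; apply: sK; by left.
    by move=> r a [Ja|Ka]; right; apply: KM => //; apply: sK; left.
  by move=> [/(fun h => sK 1 (or_introl h))|].
have KA : forall x, K x -> A x.
  move=> x Kx; apply: contrapT => nAx; apply: (Amax K) => //; split.
    by move=> y Ay; apply: sK; right.
  by move=> /(_ x Kx).
by move=> x; split; [right; apply: KA|apply: sK].
Qed.

Lemma maximal_prime (R : comPzRingType) (m : R -> Prop) :
  is_maximal_ideal m -> is_prime_ideal m.
Proof.
move=> [[m0 mD mM] m1 mmax]; split => // a b mab.
have [ma|nma] := pselect (m a); first by left.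
right.
pose K := fun x => exists r y, m y /\ x = r * a + y.
have Kid : is_ideal K.
  split.
  - by exists 0, 0; rewrite mul0r addr0.
  - move=> x y [r [u [mu ->]]] [r' [v [mv ->]]].
    exists (r + r'), (u + v); split; first exact: mD.
    by rewrite mulrDl addrACA.
  - move=> t x [r [u [mu ->]]]; exists (t * r), (t * u); split; first exact: mM.
    by rewrite mulrDr mulrA.
have sK : forall x, m x -> K x.
  by move=> x mx; exists 0, x; rewrite mul0r add0r.
have [h|h] := mmax K Kid sK.
  by exfalso; apply: nma; apply/h; exists 1, 0; rewrite mul1r addr0.
have [r [y [my e1]]] := h 1.
have -> : b = r * (a * b) + b * y.
  rewrite -{1}[b]mulr1 e1 mulrDr; congr (_ + _).
  by rewrite mulrCA (mulrC b a).
by apply: mD; apply: mM.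
Qed.
Section S.
Variables (R : comPzRingType) (M : lmodType R).

Fixpoint span_rec (s : seq M) (x : M) : Prop :=
  match s with
  | [::] => x = 0
  | a :: s' => exists r y, span_rec s' y /\ x = r *: a + y
  end.

Lemma span_recE s x : span_of s x <-> span_rec s x.
Proof.
elim: s x => [|a s IH] x /=.
  split; first by move=> [c ->]; rewrite big_ord0.
  by move=> ->; exists (fun _ => 0); rewrite big_ord0.
split.
  move=> [c ->]; rewrite big_ord_recl /=.
  exists (c ord0), (\sum_(i < size s) c (lift ord0 i) *: s`_i); split => //.
  by apply/IH; exists (fun i => c (lift ord0 i)).
move=> [r [y [/IH [c ->] ->]]].
exists (fun i : 'I_(size s).+1 => if unlift ord0 i is Some j then c j else r).
rewrite big_ord_recl /= unlift_none; congr (_ + _).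
by apply: eq_bigr => i _; rewrite liftK.
Qed.

Lemma span_rec_cat s1 s2 x :
  span_rec (s1 ++ s2) x <-> exists a b, [/\ span_rec s1 a, span_rec s2 b & x = a + b].
Proof.
elim: s1 x => [|c s1 IH] x /=.
  split; first by move=> h; exists 0, x; rewrite add0r.
  by move=> [a [b [-> h ->]]]; rewrite add0r.
split.
  move=> [r [y [/IH [a [b [ha hb ->]]] ->]]].
  by exists (r *: c + a), b; split => //; [exists r, a | rewrite addrA].
move=> [a [b [[r [y [hy ->]]] hb ->]]].
exists r, (y + b); split; last by rewrite addrA.
by apply/IH; exists y, b.
Qed.

Definition good (t : R) : Prop :=
  forall N : M -> Prop, is_submodule N ->
      exists F : M -> Prop,
        [/\ is_submodule F, finitely_generated F,
            (forall x, F x -> N x) & (forall x, N x -> F (t *: x))].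

Lemma good_ideal : is_ideal good.
Proof.
split.
- move=> N [N0 ND NZ]; exists (fun x => x = 0); split.
  + split => //; first by move=> x y -> ->; rewrite addr0.
    by move=> r x ->; rewrite scaler0.
  + by exists [::] => x; apply: iff_sym; apply: iff_trans (span_recE _ _) _.
  + by move=> x ->.
  + by move=> x _; rewrite scale0r.
- move=> a b ga gb N hN; have [N0 ND NZ] := hN.
  have [F1 [[F10 F1D F1Z] [s1 hs1] F1N NF1]] := ga N hN.
  have [F2 [[F20 F2D F2Z] [s2 hs2] F2N NF2]] := gb N hN.
  exists (fun x => exists u v, [/\ F1 u, F2 v & x = u + v]); split.
  + split.
    * by exists 0, 0; rewrite addr0.
    * move=> x y [u [v [hu hv ->]]] [u' [v' [hu' hv' ->]]].
      exists (u + u'), (v + v'); split; [exact: F1D|exact: F2D|].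
      by rewrite addrACA.
    * move=> r x [u [v [hu hv ->]]]; exists (r *: u), (r *: v); split;
        [exact: F1Z|exact: F2Z|by rewrite scalerDr].
  + exists (s1 ++ s2) => x; apply: iff_trans _ (iff_sym (span_recE _ _)).
    apply: iff_trans _ (iff_sym (span_rec_cat _ _ _)); split.
      move=> [u [v [/hs1/span_recE hu /hs2/span_recE hv ->]]].
      by exists u, v.
    move=> [u [v [/span_recE/hs1 hu /span_recE/hs2 hv ->]]]; by exists u, v.
  + by move=> x [u [v [hu hv ->]]]; apply: ND; [apply: F1N|apply: F2N].
  + move=> x Nx; exists (a *: x), (b *: x); split; [exact: NF1|exact: NF2|].
    by rewrite scalerDl.
- move=> r a ga N hN.
  have [F [[F0 FD FZ] fg FN NF]] := ga N hN.
  exists F; split => //.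
  by move=> x Nx; rewrite -scalerA; apply: FZ; apply: NF.
Qed.

Lemma good1 : good 1 -> noetherian_module M.
Proof.
move=> g N hN; have [F [_ [s hs] FN NF]] := g N hN.
exists s => x; apply: iff_trans _ (hs x); split; last exact: FN.
by move=> /NF; rewrite scale1r.
Qed.
End S.

Lemma noeth_unif (R : comPzRingType) (M : lmodType R) (S : R -> Prop) :
  S 1 -> noetherian_module M -> uniformly_S_noetherian S M.
Proof.
move=> S1 hM; exists 1 => // N hN; exists N; split => //; first exact: hM.
by move=> x Nx; rewrite scale1r.
Qed.

Lemma unif_noeth (R : comPzRingType) (M : lmodType R) :
  (forall m : R -> Prop, is_maximal_ideal m ->
      uniformly_S_noetherian (fun r => ~ m r) M) -> noetherian_module M.
Proof.
move=> h; have [g1|ng1] := pselect (good M 1); first exact: good1.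
have [m [mm sm]] := exists_maximal (good_ideal M) ng1.
have [s ns gs] := h m mm.
by exfalso; apply: ns; apply: sm; exact: gs.
Qed.

Theorem proposition2p16 (R : comPzRingType) (M : lmodType R) :
  (noetherian_module M <->
   (forall p : R -> Prop, is_prime_ideal p ->
      uniformly_S_noetherian (fun r => ~ p r) M)) /\
  (noetherian_module M <->
   (forall m : R -> Prop, is_maximal_ideal m ->
      uniformly_S_noetherian (fun r => ~ m r) M)).
Proof.
split; split.
- by move=> hM p [_ p1 _]; apply: noeth_unif.
- by move=> h; apply: unif_noeth => m /maximal_prime; apply: h.
- by move=> hM m [_ m1 _]; apply: noeth_unif.
- exact: unif_noeth.
Qed.
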